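(* Let $n\geq 2$. If $A$ is an $L_n$-good $n\times n$ matrix, then no column of $A$ has entries equal to $1$ in both the first row and the last row.
   Context: For $n\geq 2$, $L_n$ is the set of vectors $\vec{x}=(x_1,\ldots,x_n)\in\mathbb{Z}_2^n$ with no $i\in\{1,\ldots,n-1\}$ such that $x_i=x_{i+1}=1$, and with not both $x_1=1$ and $x_n=1$. An $n\times n$ matrix $A$ over $\mathbb{Z}_2$ is $L_n$-good if it is invertible and $A\vec{x}\in L_n$ for all $\vec{x}\in L_n$. *)

(* Defs.v *)
From mathcomp Require Import all_boot all_algebra.
Set Implicit Arguments. Unset Strict Implicit. Unset Printing Implicit Defensive.
Import GRing.Theory.
Local Open Scope ring_scope.

(* Z_2 is 'F_2.  Vectors of Z_2^n are column vectors 'cV['F_2]_n,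
   indices 'I_n correspond to 1..n via i |-> i+1. *)

Definition inL (n : nat) (x : 'cV['F_2]_n) : Prop :=
  (forall i j : 'I_n, (j : nat) = i.+1 -> ~ (x i 0 = 1 /\ x j 0 = 1)) /\
  (forall i j : 'I_n, (i : nat) = 0%N -> (j : nat) = n.-1 ->
       ~ (x i 0 = 1 /\ x j 0 = 1)).

Definition L_good (n : nat) (A : 'M['F_2]_n) : Prop :=
  A \in unitmx /\ forall x : 'cV['F_2]_n, inL x -> inL (A *m x).

(* Main.v *)
Require Import Defs.
From mathcomp Require Import all_boot all_algebra.
From mathcomp Require Import zify.
Import GRing.Theory.
Local Open Scope ring_scope.

Lemma col_e (n : nat) (A : 'M['F_2]_n) (j i : 'I_n) :
  (A *m (delta_mx j (0 : 'I_1) : 'cV['F_2]_n)) i 0 = A i j.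
Proof.
rewrite mxE (bigD1 j) //= big1 ?addr0; first by rewrite mxE !eqxx mulr1.
by move=> k /negbTE hk; rewrite mxE hk mulr0.
Qed.

Lemma e_inL (n : nat) (hn : (2 <= n)%N) (j : 'I_n) :
  inL (delta_mx j (0 : 'I_1) : 'cV['F_2]_n).
Proof.
have E : forall i : 'I_n, (delta_mx j (0 : 'I_1) : 'cV['F_2]_n) i 0 = (1 : 'F_2) -> i = j.
  move=> i; rewrite /delta_mx mxE eqxx andbT; case: (i == j) /eqP => //= _ H.
split.
  move=> i k hk [/E hi /E hkj].
  by move: hk; rewrite hi hkj => /n_Sn.
move=> i k hi hk [/E hij /E hkj].
move: hi hk; rewrite hij hkj => h0 h; lia.
Qed.

Theorem lemma3 (n : nat) (hn : (2 <= n)%N) (A : 'M['F_2]_n) :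
  L_good A ->
  forall (j first last : 'I_n), (first : nat) = 0%N -> (last : nat) = n.-1 ->
    ~ (A first j = 1 /\ A last j = 1).
Proof.
move=> [_ HA] j f l hf hl [h1 h2].
have [_ H] := HA _ (@e_inL n hn j).
by apply: (H f l hf hl); rewrite !col_e.
Qed.
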